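(* Fix positive integers $l,n,r$. Let $\mathcal{L}$ be the set of isomorphism classes of $(l,n,r)$-hypergraphs and let $\mathcal{S}$ be the set of equivalence classes of bases of $\mathrm{S}_{n,\leq r}$ of size $l$. Then there is a bijection $\rho:\mathcal{L}\to\mathcal{S}$.
   Context: $\mathrm{S}_{n,\leq r}$ denotes the symmetric group $\mathrm{S}_n$ acting naturally on the set of subsets of $[n]=\{1,\dots,n\}$ of size at most $r$. A base of $\mathrm{S}_{n,\leq r}$ is a set $\mathcal{B}$ of (distinct) subsets of $[n]$, each of size at most $r$, whose pointwise stabiliser in $\mathrm{S}_n$ is trivial; its size is $|\mathcal{B}|$. Two bases $\mathcal{B}_1,\mathcal{B}_2$ are equivalent if $\mathcal{B}_1^\sigma=\mathcal{B}_2$ for some $\sigma\in\mathrm{S}_n$. For a hypergraph $H=(V,E)$ (edges are subsets of $V$, possibly the empty set) and $v\in V$, the neighbourhood of $v$ is the multiset $N_H(v)=\{e\in E: v\in e\}$ and the degree of $v$ is $|N_H(v)|$. A hypergraph is irrepeating if all its edges are distinct and all its vertices have distinct neighbourhoods. An $(l,n,r)$-hypergraph is an irrepeating hypergraph with $l$ vertices, $n$ edges (possibly including the empty edge), and maximum vertex degree at most $r$. *)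

(* Defs.v *)
From mathcomp Require Import all_boot all_fingroup.
Set Implicit Arguments. Unset Strict Implicit. Unset Printing Implicit Defensive.

(* A hypergraph with l vertices is modelled on the vertex set 'I_l; its edge
   set is a set of subsets of 'I_l (edges of an irrepeating hypergraph are
   distinct, so the edge multiset is a set; the empty edge is allowed). *)

Definition hg_nbhd (l : nat) (E : {set {set 'I_l}}) (v : 'I_l) : {set {set 'I_l}} :=
  [set e in E | v \in e].

Definition lnr_hypergraph (l n r : nat) (E : {set {set 'I_l}}) : bool :=
  [&& #|E| == n,
      [forall v : 'I_l, #|hg_nbhd E v| <= r]
    & injectiveb (hg_nbhd E)].

Definition perm_sets (m : nat) (s : {perm 'I_m}) (E : {set {set 'I_m}}) : {set {set 'I_m}} :=
  (fun e : {set 'I_m} => s @: e) @: E.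

Definition hg_iso (l : nat) (E1 E2 : {set {set 'I_l}}) : bool :=
  [exists s : {perm 'I_l}, perm_sets s E1 == E2].

Definition hg_class (l : nat) (E : {set {set 'I_l}}) : {set {set {set 'I_l}}} :=
  [set E' | hg_iso E E'].

Definition hg_classes (l n r : nat) : {set {set {set {set 'I_l}}}} :=
  (@hg_class l) @: [set E | @lnr_hypergraph l n r E].

(* base of S_{n,<=r}: subsets of size <= r with trivial pointwise stabiliser *)
Definition is_base (n r : nat) (B : {set {set 'I_n}}) : bool :=
  [forall e in B, #|e| <= r] &&
  [forall s : {perm 'I_n}, [forall e in B, s @: e == e] ==> (s == 1%g)].

Definition base_equiv (n : nat) (B1 B2 : {set {set 'I_n}}) : bool :=
  [exists s : {perm 'I_n}, perm_sets s B1 == B2].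

Definition base_class (n : nat) (B : {set {set 'I_n}}) : {set {set {set 'I_n}}} :=
  [set B' | base_equiv B B'].

Definition base_classes (l n r : nat) : {set {set {set {set 'I_n}}}} :=
  (@base_class n) @: [set B | @is_base n r B & #|B| == l].

(* Main.v *)
Require Import Defs.
From mathcomp Require Import all_boot all_fingroup.
Set Implicit Arguments. Unset Strict Implicit. Unset Printing Implicit Defensive.

Lemma mk_perm (I : finType) (X : eqType) (F G : I -> X) :
  injective F -> (forall i, exists j, G j = F i) ->
  exists s : {perm I}, forall i, G (s i) = F i.
Proof.
move=> injF HG.
pose h i := odflt i [pick j | G j == F i].
have Hh : forall i, G (h i) = F i.
  move=> i; rewrite /h; case: pickP => [j /eqP //|H].
  have [j Hj] := HG i; by move: (H j); rewrite Hj eqxx.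
have hinj : injective h by move=> i k Hik; apply: injF; rewrite -!Hh Hik.
by exists (perm hinj) => i; rewrite permE.
Qed.

Lemma enum_set (T : finType) (A : {set T}) k : #|A| = k ->
  exists f : {ffun 'I_k -> T}, injective f /\ f @: setT = A.
Proof.
move=> <-.
exists [ffun i => enum_val i]; split.
  by move=> i j; rewrite !ffunE; apply: enum_val_inj.
apply/setP => x; apply/imsetP/idP.
  by case=> i _ ->; rewrite ffunE; apply: enum_valP.
move=> Ax; exists (enum_rank_in Ax x) => //.
by rewrite ffunE enum_rankK_in.
Qed.

Lemma perm_setsM m (s t : {perm 'I_m}) E :
  perm_sets (s * t) E = perm_sets t (perm_sets s E).
Proof.
rewrite /perm_sets -imset_comp; apply: eq_imset => e /=.
rewrite -imset_comp; apply: eq_imset => x /=; by rewrite permM.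
Qed.

Lemma perm_sets1 m E : perm_sets (1 : {perm 'I_m}) E = E.
Proof.
rewrite /perm_sets (eq_imset _ (g := id)) ?imset_id // => e.
by rewrite (eq_imset _ (g := id)) ?imset_id // => x; rewrite perm1.
Qed.

Lemma hg_class_eq l (E1 E2 : {set {set 'I_l}}) :
  hg_iso E1 E2 -> hg_class E1 = hg_class E2.
Proof.
case/existsP=> p /eqP Hp; apply/setP => E; rewrite !inE.
apply/existsP/existsP => [[q /eqP Hq]|[q /eqP Hq]].
  exists (p^-1 * q)%g; rewrite perm_setsM -Hp -(perm_setsM p) mulgV perm_sets1.
  by rewrite Hq.
by exists (p * q)%g; rewrite perm_setsM Hp Hq.
Qed.

Definition gf l n (f : 'I_n -> {set 'I_l}) (v : 'I_l) : {set 'I_n} :=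
  [set i | v \in f i].
Definition dualB l n (f : 'I_n -> {set 'I_l}) : {set {set 'I_n}} :=
  [set gf f v | v : 'I_l].

Lemma compat l n (f1 f2 : 'I_n -> {set 'I_l}) (s : {perm 'I_n}) (p : {perm 'I_l}) :
  (forall v i, (p v \in f2 (s i)) = (v \in f1 i)) ->
  perm_sets p (f1 @: setT) = f2 @: setT /\ perm_sets s (dualB f1) = dualB f2.
Proof.
move=> M.
have Ha : forall i, f2 (s i) = p @: f1 i.
  move=> i; apply/setP => w; rewrite -(permKV p w) mem_imset ?M //; exact: perm_inj.
have Hb : forall v, s @: gf f1 v = gf f2 (p v).
  move=> v; apply/setP => x; rewrite -(permKV s x) mem_imset; last exact: perm_inj.
  by rewrite !inE M.
split.
  rewrite /perm_sets -imset_comp.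
  rewrite (eq_imset _ (g := f2 \o s)); last by move=> i /=; rewrite Ha.
  have HsT : s @: setT = setT.
    by apply/setP => x; rewrite !inE; apply/imsetP; exists (s^-1 x)%g; rewrite ?permKV.
  by rewrite imset_comp HsT.
rewrite /perm_sets /dualB -imset_comp.
rewrite (eq_imset _ (g := gf f2 \o p)); last by move=> v /=; rewrite Hb.
have HpT : [set p x | x : 'I_l] = setT.
  by apply/setP => x; rewrite !inE; apply/imsetP; exists (p^-1 x)%g; rewrite ?permKV.
rewrite imset_comp HpT; apply/setP=> x; by apply/imsetP/imsetP => -[y _ ->]; exists y.
Qed.

Lemma nbhd_img l n (f : 'I_n -> {set 'I_l}) v :
  hg_nbhd (f @: setT) v = f @: gf f v.
Proof.
apply/setP => e; rewrite inE; apply/idP/idP.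
  by case/andP=> /imsetP[i _ ->] Hv; apply/imsetP; exists i; rewrite ?inE.
case/imsetP=> i; rewrite inE => Hv ->; apply/andP; split => //.
by apply/imsetP; exists i.
Qed.

Lemma perm_fix_mem n (s : {perm 'I_n}) (A : {set 'I_n}) i :
  s @: A = A -> (s i \in A) = (i \in A).
Proof. by move=> H; rewrite -{1}H mem_imset //; exact: perm_inj. Qed.

Lemma L1 l n r (f : 'I_n -> {set 'I_l}) :
  injective f -> @lnr_hypergraph l n r (f @: setT) ->
  [/\ @is_base n r (dualB f), #|dualB f| = l & injective (gf f)].
Proof.
move=> finj /and3P[_ /forallP Hdeg /injectiveP Hnb].
have gfinj : injective (gf f).
  by move=> v w H; apply: Hnb; rewrite !nbhd_img H.
have Hcard : forall v, #|gf f v| <= r.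
  by move=> v; move: (Hdeg v); rewrite nbhd_img card_imset.
split => //; last by rewrite card_imset // card_ord.
apply/andP; split.
  by apply/forallP => e; apply/implyP => /imsetP[v _ ->].
apply/forallP => s; apply/implyP => /forallP Hs; apply/eqP/permP => i.
rewrite perm1; apply: finj; apply/setP => v.
have: s @: gf f v = gf f v.
  by apply/eqP; move: (Hs (gf f v)); rewrite mem_imset.
move/perm_fix_mem => /(_ i); by rewrite !inE.
Qed.

Lemma tperm_fix n (i j : 'I_n) (A : {set 'I_n}) :
  (i \in A) = (j \in A) -> tperm i j @: A = A.
Proof.
move=> H; apply/setP => x.
rewrite -{1}(tpermK i j x) mem_imset; last exact: perm_inj.
by case: tpermP => [->|->|] //; rewrite H.
Qed.

Lemma L2 l n r (B : {set {set 'I_n}}) :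
  @is_base n r B -> #|B| = l ->
  exists f : {ffun 'I_n -> {set 'I_l}},
    [/\ injective f, @lnr_hypergraph l n r (f @: setT) & dualB f = B].
Proof.
move=> /andP[/forallP Hr /forallP Hst] Hl.
have [g [ginj gimg]] := enum_set Hl.
exists [ffun i => [set v | i \in g v]].
have Hgf : forall v, gf [ffun i => [set v | i \in g v]] v = g v.
  by move=> v; apply/setP => i; rewrite !inE ffunE inE.
have HB : dualB [ffun i => [set v | i \in g v]] = B.
  rewrite -gimg /dualB; apply/setP => x.
  by apply/imsetP/imsetP => -[y _ ->]; exists y; rewrite ?Hgf.
have gB : forall v, g v \in B by move=> v; rewrite -gimg mem_imset.
have finj : injective [ffun i => [set v | i \in g v]].
  move=> i j; rewrite !ffunE => H.
  have : tperm i j == 1%g.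
    apply: (implyP (Hst (tperm i j))); apply/forallP => e; apply/implyP.
    rewrite -gimg => /imsetP[v _ ->]; apply/eqP/tperm_fix.
    by move/setP: H => /(_ v); rewrite !inE.
  move/eqP/permP => /(_ i); rewrite tpermL perm1 => ->; done.
split => //.
apply/and3P; split.
- by rewrite card_imset // cardsT card_ord.
- apply/forallP => v; rewrite nbhd_img card_imset // Hgf.
  exact: (implyP (Hr (g v)) (gB v)).
- apply/injectiveP => v w; rewrite !nbhd_img => /(imset_inj finj).
  by rewrite !Hgf => /ginj.
Qed.

Definition Dualb l n (E : {set {set 'I_l}}) (B : {set {set 'I_n}}) : bool :=
  [exists f : {ffun 'I_n -> {set 'I_l}},
     [&& injectiveb f, f @: setT == E & dualB f == B]].

Definition rho l n (C : {set {set {set 'I_l}}}) : {set {set {set 'I_n}}} :=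
  [set B | [exists E in C, Dualb E B]].

Lemma rho_class l n (E0 : {set {set 'I_l}}) (f0 : 'I_n -> {set 'I_l}) :
  injective f0 -> f0 @: setT = E0 ->
  rho n (hg_class E0) = base_class (dualB f0).
Proof.
move=> f0inj f0img; apply/setP => B; rewrite !inE.
apply/existsP/existsP.
  case=> E /andP[]; rewrite inE => /existsP[p /eqP Hp].
  case/existsP=> f /and3P[/injectiveP finj /eqP fimg /eqP fB].
  have [s Hs] : exists s : {perm 'I_n}, forall i, f (s i) = p @: f0 i.
    apply: mk_perm.
    by move=> i j /(imset_inj (@perm_inj _ p)) /f0inj.
    move=> i; have : p @: f0 i \in f @: setT.
      by rewrite fimg -Hp -f0img; apply/imsetP; exists (f0 i) => //; apply/imsetP; exists i.
    by case/imsetP=> j _ ->; exists j.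
  exists s; rewrite -fB.
  have M : forall v i, (p v \in f (s i)) = (v \in f0 i).
    by move=> v i; rewrite Hs mem_imset //; exact: perm_inj.
  by have [_ ->] := compat M.
case=> s /eqP Hs.
pose f := [ffun i => f0 (s^-1 i)%g].
have M : forall v i, ((1%g : {perm 'I_l}) v \in f (s i)) = (v \in f0 i).
  by move=> v i; rewrite perm1 ffunE permK.
have [H1 H2] := compat M.
exists (f @: setT); rewrite inE; apply/andP; split.
  by apply/existsP; exists 1%g; rewrite -f0img H1.
apply/existsP; exists f; rewrite eqxx -Hs H2 eqxx andbT /=.
rewrite andbT; apply/injectiveP => i j; rewrite !ffunE => /f0inj; exact: perm_inj.
Qed.

Lemma lnr_card l n r (E : {set {set 'I_l}}) : @lnr_hypergraph l n r E -> #|E| = n.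
Proof. by case/and3P => /eqP. Qed.

Theorem proposition2p2 (l n r : nat) (hl : 0 < l) (hn : 0 < n) (hr : 0 < r) :
  exists rho : {set {set {set 'I_l}}} -> {set {set {set 'I_n}}},
    {in hg_classes l n r &, injective rho} /\
    rho @: hg_classes l n r = base_classes l n r.
Proof.
exists (rho n); split.
  move=> C1 C2 /imsetP[E1]; rewrite inE => HE1 -> /imsetP[E2]; rewrite inE => HE2 ->.
  have [f1 [f1inj f1img]] := enum_set (lnr_card HE1).
  have [f2 [f2inj f2img]] := enum_set (lnr_card HE2).
  rewrite (rho_class f1inj f1img) (rho_class f2inj f2img) => Heq.
  have : dualB f2 \in base_class (dualB f1).
    by rewrite Heq inE; apply/existsP; exists 1%g; rewrite perm_sets1.
  rewrite inE => /existsP[s /eqP Hs].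
  have HE1' : @lnr_hypergraph l n r (f1 @: setT) by rewrite f1img.
  have [_ _ gf1inj] := L1 f1inj HE1'.
  have [p Hp] : exists p : {perm 'I_l}, forall v, gf f2 (p v) = s @: gf f1 v.
    apply: mk_perm.
    by move=> v w /(imset_inj (@perm_inj _ s)) /gf1inj.
    move=> v; have : s @: gf f1 v \in dualB f2.
      by rewrite -Hs; apply/imsetP; exists (gf f1 v) => //; apply/imsetP; exists v.
    by case/imsetP=> w _ Hw; exists w; rewrite Hw.
  have M : forall v i, (p v \in f2 (s i)) = (v \in f1 i).
    move=> v i; have := Hp v => /setP /(_ (s i)).
    rewrite mem_imset; last exact: perm_inj.
    by rewrite !inE.
  have [H1 _] := compat M.
  by apply: hg_class_eq; apply/existsP; exists p; rewrite -f1img -f2img H1.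
apply/setP => X; apply/imsetP/imsetP.
  case=> C /imsetP[E]; rewrite inE => HE -> ->.
  have [f [finj fimg]] := enum_set (lnr_card HE).
  rewrite (rho_class finj fimg); exists (dualB f) => //.
  have HE' : @lnr_hypergraph l n r (f @: setT) by rewrite fimg.
  have [Hb Hc _] := L1 finj HE'.
  by rewrite inE Hb Hc eqxx.
case=> B; rewrite inE => /andP[HB /eqP HBl] ->.
have [f [finj flnr fB]] := L2 HB HBl.
exists (hg_class (f @: setT)).
  by apply/imsetP; exists (f @: setT); rewrite ?inE.
by rewrite (rho_class finj erefl) fB.
Qed.
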